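(* Let $G=(V,E)$ be a finite simple graph of order $n$ and let $T=n-1$. If $(x,y,z)$ is an optimal solution of the integer program with the constraints of the Time Step Model $\mathrm{TSM}(G,T)$ and objective ''minimize $\sum_{v\in V}x^0_v+\sum_{t\in[T]}z^t$'', then $C=\{v\in V\colon x^0_v=1\}$ is a zero forcing set of $G$ with $\mathrm{th}(G)=\mathrm{th}(G,C)=\sum_{v\in V}x^0_v+\sum_{t\in[T]}z^t$.
   Context: Zero forcing: under the standard color change rule a filled vertex $u$ can force a non-filled vertex $v$ if $v$ is the only non-filled neighbor of $u$; $C\subseteq V$ is a zero forcing set if, starting with $C$ filled and repeatedly forcing, all of $V$ becomes filled. The propagation time $\mathrm{pt}(G,C)$ is the smallest $t^*$ such that, starting from $C^{[0]}=C$ and setting $C^{[t]}=C^{[t-1]}\cup\{v\notin C^{[t-1]}\colon$ some $u\in C^{[t-1]}$ has $v$ as its only neighbor outside $C^{[t-1]}\}$, one has $C^{[t^*]}=V$ ($\infty$ if $C$ is not a zero forcing set). $\mathrm{th}(G,C)=|C|+\mathrm{pt}(G,C)$ and $\mathrm{th}(G)=\min_{C\subseteq V}\mathrm{th}(G,C)$. $N(u)$ is the neighborhood of $u$ and $d(u)=|N(u)|$. Time Step Model constraints: $A$ is the set of arcs containing $(u,v)$ and $(v,u)$ for each edge $\{u,v\}$, $[T]=\{1,\dots,T\}$. Binary variables $x^t_v$ ($v\in V$, $t\in\{0,\dots,T\}$), $y^t_a$ ($a\in A$, $t\in[T]$), $z^t$ ($t\in[T]$), with constraints: (1) $x^0_v+\sum_{t\in[T]}\sum_{a=(u,v)\in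 A}y^t_a=1$ for all $v$; (2) $y^t_a\leq x^{t-1}_u$ for all $a=(u,v)\in A$, $t\in[T]$; (3) $y^t_a\leq x^{t-1}_w$ for all $a=(u,v)\in A$, $w\in N(u)\setminus\{v\}$, $t\in[T]$; (4) $x^t_v=x^{t-1}_v+\sum_{a=(u,v)\in A}y^t_a$ for all $v$, $t\in[T]$; (5) $x^{t-1}_u-x^{t-1}_v+\sum_{w\in N(u)\setminus\{v\}}x^{t-1}_w\leq\sum_{a=(w,v)\in A}y^t_a+d(u)-1$ for all $(u,v)\in A$, $t\in[T]$; (6) $\frac1n\sum_{v\in V}(x^t_v-x^{t-1}_v)-z^t\leq0$ for all $t\in[T]$; (7) $z^t-\sum_{v\in V}(x^t_v-x^{t-1}_v)\leq 0$ for all $t\in[T]$. *)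

(* Defs.v *)
From mathcomp Require Import all_boot all_order all_algebra.
Set Implicit Arguments. Unset Strict Implicit. Unset Printing Implicit Defensive.
Import Order.TTheory GRing.Theory Num.Theory.

(* A finite simple graph: vertex type V : finType, adjacency e : rel V,
   assumed symmetric and irreflexive (hypotheses of the theorem).
   N(u) = [set w | e u w], d(u) = #|N(u)|. *)

Section ZeroForcing.
Variables (V : finType) (e : rel V).

Definition nbhd (u : V) : {set V} := [set w | e u w].
Definition deg (u : V) : nat := #|nbhd u|.

Definition can_force (C : {set V}) (u v : V) : bool :=
  [&& u \in C, v \notin C, e u v &
      [forall w, (e u w && (w \notin C)) ==> (w == v)]].

Definition zf_step (C : {set V}) : {set V} :=
  C :|: [set v | [exists u, can_force C u v]].

Definition zf_iter (t : nat) (C : {set V}) : {set V} := iter t zf_step C.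

Definition zero_forcing_set (C : {set V}) : Prop :=
  exists t, zf_iter t C = setT.

(* pt(G,C) = t  (only defined when finite; otherwise pt = infinity) *)
Definition pt_is (C : {set V}) (t : nat) : Prop :=
  zf_iter t C = setT /\ forall s, (s < t)%N -> zf_iter s C != setT.

(* th(G,C) = k, for a finite value k (th(G,C) = infinity is never "= k") *)
Definition thC_is (C : {set V}) (k : nat) : Prop :=
  exists t, pt_is C t /\ k = (#|C| + t)%N.

Definition th_is (k : nat) : Prop :=
  (exists C, thC_is C k) /\ forall C k', thC_is C k' -> (k <= k')%N.

End ZeroForcing.

Local Open Scope ring_scope.

Definition b2q (b : bool) : rat := (b : nat)%:R.

Section TSM.
Variables (V : finType) (e : rel V) (T : nat).
(* Variables: x t v (t in 0..T), y t u v for the arc (u,v) (t in 1..T,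
   used only when e u v), z t (t in 1..T); all binary (bool). *)
Variables (x : nat -> V -> bool) (y : nat -> V -> V -> bool) (z : nat -> bool).

Definition inflow (t : nat) (v : V) : rat := \sum_(u | e u v) b2q (y t u v).

Definition tsm_feasible : Prop :=
  (forall v, b2q (x 0%N v) + \sum_(1 <= t < T.+1) inflow t v = 1) /\
  (forall t u v, (1 <= t <= T)%N -> e u v -> b2q (y t u v) <= b2q (x t.-1 u)) /\
  (forall t u v w, (1 <= t <= T)%N -> e u v -> e u w -> w != v ->
      b2q (y t u v) <= b2q (x t.-1 w)) /\
  (forall t v, (1 <= t <= T)%N -> b2q (x t v) = b2q (x t.-1 v) + inflow t v) /\
  (forall t u v, (1 <= t <= T)%N -> e u v ->
      b2q (x t.-1 u) - b2q (x t.-1 v) + \sum_(w | e u w && (w != v)) b2q (x t.-1 w)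
      <= inflow t v + (deg e u)%:R - 1) /\
  (forall t, (1 <= t <= T)%N ->
      (#|V|%:R)^-1 * \sum_(v : V) (b2q (x t v) - b2q (x t.-1 v)) - b2q (z t) <= 0) /\
  (forall t, (1 <= t <= T)%N ->
      b2q (z t) - \sum_(v : V) (b2q (x t v) - b2q (x t.-1 v)) <= 0).

Definition tsm_objective : rat :=
  \sum_(v : V) b2q (x 0%N v) + \sum_(1 <= t < T.+1) b2q (z t).

End TSM.

Definition tsm_optimal (V : finType) (e : rel V) (T : nat)
  (x : nat -> V -> bool) (y : nat -> V -> V -> bool) (z : nat -> bool) : Prop :=
  tsm_feasible e T x y z /\
  forall x' y' z', tsm_feasible e T x' y' z' ->
    tsm_objective T x z <= tsm_objective T x' z'.

(* Main.v *)
Require Import Defs.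
From mathcomp Require Import all_boot all_order all_algebra.
From mathcomp Require Import zify ring lra.
Import Order.TTheory GRing.Theory Num.Theory.
Local Open Scope ring_scope.
Set Implicit Arguments. Unset Strict Implicit.

Lemma b2qT : b2q true = 1. Proof. by []. Qed.
Lemma b2qF : b2q false = 0. Proof. by []. Qed.
Lemma b2q_ge0 b : 0 <= b2q b. Proof. by case: b. Qed.
Lemma b2q_le1 b : b2q b <= 1. Proof. by case: b. Qed.
Lemma b2q_ge1 b : 1 <= b2q b -> b. Proof. by case: b => //; rewrite b2qF ler10. Qed.

Lemma sum_b2q (V : finType) (P Q : pred V) :
  \sum_(w | P w) b2q (Q w) = #|[set w | P w && Q w]|%:R.
Proof.
rewrite -[in RHS]sum1dep_card natr_sum big_mkcondr /=.
by apply: eq_bigr => w _; case: (Q w).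
Qed.

Lemma sum_b2qT (V : finType) (Q : pred V) :
  \sum_(w : V) b2q (Q w) = #|[set w | Q w]|%:R.
Proof. by rewrite (@sum_b2q V xpredT Q). Qed.

Lemma sum_diff (V : finType) (A B : {set V}) :
  \sum_(v : V) (b2q (v \in B) - b2q (v \in A)) = #|B|%:R - #|A|%:R.
Proof.
rewrite sumrB !sum_b2qT; congr (_%:R - _%:R); apply: eq_card => v; by rewrite inE.
Qed.

Section ZF.
Variables (V : finType) (e : rel V).

Lemma zf_sub (X : {set V}) : X \subset zf_step e X. Proof. exact: subsetUl. Qed.

Lemma zf_step_mem (X : {set V}) v :
  (v \in zf_step e X) = (v \in X) || [exists u, can_force e X u v].
Proof. by rewrite !inE. Qed.

Lemma can_force_notin (X : {set V}) u v : can_force e X u v -> v \notin X.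
Proof. by case/and4P. Qed.

Lemma zf_fix (X : {set V}) : zf_step e X = X -> forall k, iter k (zf_step e) X = X.
Proof. by move=> H; elim=> //= k ->. Qed.

Lemma zf_setT : zf_step e setT = setT.
Proof. by apply/eqP; rewrite eqEsubset subsetT zf_sub. Qed.

Lemma zf_set0 : zf_step e set0 = set0.
Proof.
apply/setP => v; rewrite zf_step_mem inE /=; apply/existsP => [[u]].
by case/and4P; rewrite inE.
Qed.

Lemma pt_after (C : {set V}) p s : pt_is e C p -> (p <= s)%N -> zf_iter e s C = setT.
Proof.
move=> [Hp _] Hs; rewrite /zf_iter -(subnK Hs) iterD.
by rewrite -/(zf_iter e p C) Hp zf_fix // zf_setT.
Qed.

Lemma pt_grow (C : {set V}) p s : pt_is e C p -> (s < p)%N ->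
  zf_iter e s C != zf_iter e s.+1 C.
Proof.
move=> [Hp Hlt] Hs; apply/eqP => Heq.
have Hf : zf_step e (zf_iter e s C) = zf_iter e s C := esym Heq.
have := Hlt s Hs; rewrite -Hp /zf_iter -(subnK (ltnW Hs)) iterD.
by rewrite -/(zf_iter e s C) zf_fix // eqxx.
Qed.

Lemma pt_card (C : {set V}) p : pt_is e C p -> (#|C| + p <= #|V|)%N.
Proof.
move=> Hpt.
have H : forall s, (s <= p)%N -> (#|C| + s <= #|zf_iter e s C|)%N.
  elim=> [|s IH] Hs; first by rewrite addn0.
  have Hpr : zf_iter e s C \proper zf_iter e s.+1 C.
    by rewrite properEneq (pt_grow Hpt Hs) zf_sub.
  have := proper_card Hpr; have := IH (ltnW Hs); lia.
have H1 := H p (leqnn p); have H2 := max_card (zf_iter e p C); exact: leq_trans H1 H2.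
Qed.

Lemma pt_leT (C : {set V}) p : pt_is e C p -> (p <= #|V|.-1)%N.
Proof.
move=> Hpt; have Hc := pt_card Hpt.
case: (boolP (C == set0)) => [/eqP HC | HC].
  have : zf_iter e p C = setT by case: Hpt.
  rewrite HC /zf_iter zf_fix ?zf_set0 // => H0.
  have : #|[set: V]| = 0%N by rewrite -H0 cards0.
  rewrite cardsT; move: Hc; rewrite HC cards0; lia.
rewrite -card_gt0 in HC; lia.
Qed.

Definition cnt T (C : {set V}) := (\sum_(1 <= t < T.+1) (zf_iter e t C != zf_iter e t.-1 C))%N.

Lemma cnt_pt T (C : {set V}) p : pt_is e C p -> (p <= T)%N -> cnt T C = p.
Proof.
move=> Hpt HpT; rewrite /cnt (@big_cat_nat _ _ _ p.+1) //=.
rewrite (@eq_big_nat _ _ _ 1 p.+1 _ (fun _ => 1%N)); last first.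
  move=> [|t] //= Ht; have Ht' : (t < p)%N by lia.
  by move: (pt_grow Hpt Ht'); rewrite eq_sym => ->.
rewrite sum_nat_const_nat big1_seq ?subn1 ?muln1 ?addn0 //.
move=> t /andP [_]; rewrite mem_index_iota => /andP [Ht _].
case: t Ht => [|t] // Ht.
rewrite (@pt_after _ _ t.+1 Hpt) ?(@pt_after _ _ t Hpt) ?eqxx //=; lia.
Qed.

End ZF.

Lemma tele (V : finType) (e : rel V) T (x : nat -> V -> bool) (y : nat -> V -> V -> bool) v :
  (forall t, (1 <= t <= T)%N -> b2q (x t v) = b2q (x t.-1 v) + inflow e y t v) ->
  forall t, (t <= T)%N -> b2q (x t v) = b2q (x 0%N v) + \sum_(1 <= s < t.+1) inflow e y s v.
Proof.
move=> H; elim=> [|t IH] Ht; first by rewrite big_geq // addr0.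
rewrite big_nat_recr //= H /=; last by lia.
by rewrite IH ?(ltnW Ht) // addrA.
Qed.

Lemma deg_split (V : finType) (e : rel V) u v : e u v ->
  deg e u = #|[set w | e u w && (w != v)]|.+1.
Proof.
move=> Huv; rewrite /deg (cardsD1 v) inE Huv add1n; congr (_.+1).
by apply: eq_card => w; rewrite !inE andbC.
Qed.

Section Constr.
Variables (V : finType) (e : rel V) (T : nat) (C : {set V}).
Hypothesis HT : zf_iter e T C = setT.

Definition xc t v := v \in zf_iter e t C.
Definition yc t u v := [pick w | can_force e (zf_iter e t.-1 C) w v] == Some u.
Definition zc t := zf_iter e t C != zf_iter e t.-1 C.

Lemma inflow_c t v : inflow e yc t v = b2q [exists u, can_force e (zf_iter e t.-1 C) u v].
Proof.
rewrite /inflow /yc; case: pickP => [w Hw | Hn].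
  have Hwv : e w v by case/and4P: Hw.
  have -> : [exists u, can_force e (zf_iter e t.-1 C) u v] by apply/existsP; exists w.
  rewrite (bigD1 w) //= eqxx big1 ?addr0 // => u /andP [_ Huw].
  by rewrite eq_sym (inj_eq Some_inj) (negbTE Huw).
have -> : [exists u, can_force e (zf_iter e t.-1 C) u v] = false.
  by apply/existsP => [[u]]; rewrite Hn.
by rewrite big1.
Qed.

Lemma step_c s v : b2q (xc s.+1 v) = b2q (xc s v) + inflow e yc s.+1 v.
Proof.
rewrite inflow_c /xc /= zf_step_mem.
case: (boolP (v \in zf_iter e s C)) => Hv /=.
  have -> : [exists u, can_force e (zf_iter e s C) u v] = false.
    by apply/existsP => [[u]] /can_force_notin; rewrite Hv.
  by rewrite addr0.
by rewrite add0r.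
Qed.

Lemma feas_c : tsm_feasible e T xc yc zc.
Proof.
have H4 : forall t v, (1 <= t <= T)%N -> b2q (xc t v) = b2q (xc t.-1 v) + inflow e yc t v.
  by move=> [|s] v //= _; rewrite step_c.
have Hcf : forall t u v, yc t u v -> can_force e (zf_iter e t.-1 C) u v.
  by move=> t u v; rewrite /yc; case: pickP => // w Hw /eqP [<-].
split.
  move=> v; rewrite -(tele (fun t => H4 t v) (leqnn T)); by rewrite /xc HT inE.
split.
  move=> t u v _ _; case Hy: (yc t u v); last exact: b2q_ge0.
  by rewrite /xc; case/and4P: (Hcf _ _ _ Hy) => ->.
split.
  move=> t u v w _ _ Huw Hwv; case Hy: (yc t u v); last exact: b2q_ge0.
  case/and4P: (Hcf _ _ _ Hy) => _ _ _ /forallP /(_ w); rewrite Huw /= /xc.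
  case: (w \in zf_iter e t.-1 C) => //= /eqP Hw; by rewrite Hw eqxx in Hwv.
split; first exact: H4.
split.
  move=> [|s] u v // HsT Huv /=.
  rewrite inflow_c sum_b2q (deg_split Huv) /xc /=.
  set X := zf_iter e s C.
  set A := [set w | e u w && (w != v)].
  set S := [set w | (e u w && (w != v)) && (w \in X)].
  have SA : S \subset A by apply/subsetP => w; rewrite !inE => /andP [].
  have hSA := subset_leq_card SA.
  have hSAq : (#|S|%:R : rat) <= #|A|%:R by rewrite ler_nat.
  have hu := b2q_le1 (u \in X); have hv := b2q_ge0 (v \in X).
  rewrite -addn1 natrD.
  case Hex: [exists u0, can_force e X u0 v].
    rewrite b2qT; lra.
  case Hu: (u \in X); last by rewrite ?b2qF; lra.
  case Hv: (v \in X); first by rewrite ?b2qT ?b2qF; lra.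
  have hlt : (#|S| < #|A|)%N.
    rewrite ltn_neqAle hSA andbT; apply/negP => /eqP hc.
    have eSA : S = A by apply/eqP; rewrite eqEcard SA hc leqnn.
    move/negbT: Hex => /existsP; apply; exists u.
    rewrite /can_force Hu Hv Huv /=; apply/forallP => w; apply/implyP => /andP [euw wX].
    apply/negPn/negP => wv.
    have : w \in A by rewrite inE euw wv.
    by rewrite -eSA inE euw wv (negbTE wX).
  have : (#|S|.+1%:R : rat) <= #|A|%:R by rewrite ler_nat.
  rewrite -addn1 natrD ?b2qT ?b2qF; lra.
split.
  move=> [|s] // _; rewrite /xc sum_diff /zc /=.
  case: (boolP (zf_step e (zf_iter e s C) != zf_iter e s C)) => Hne.
    have Hpr : zf_iter e s C \proper zf_step e (zf_iter e s C).
      by rewrite properEneq eq_sym Hne zf_sub.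
    have h1 := proper_card Hpr.
    have h2 := max_card (zf_step e (zf_iter e s C)).
    have hn : (0 < #|V|)%N by lia.
    have hnq : (0 : rat) < #|V|%:R by rewrite ltr0n.
    rewrite b2qT subr_le0 ler_pdivrMl // mulr1.
    have : (#|zf_step e (zf_iter e s C)|%:R : rat) <= #|V|%:R by rewrite ler_nat.
    have : (0 : rat) <= #|zf_iter e s C|%:R by rewrite ler0n.
    lra.
  by rewrite negbK in Hne; rewrite (eqP Hne) subrr mulr0 b2qF subrr.
move=> [|s] // _; rewrite /xc sum_diff /zc /=.
case: (boolP (zf_step e (zf_iter e s C) != zf_iter e s C)) => Hne.
  have Hpr : zf_iter e s C \proper zf_step e (zf_iter e s C).
    by rewrite properEneq eq_sym Hne zf_sub.
  have h1 := proper_card Hpr.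
  have : (#|zf_iter e s C|.+1%:R : rat) <= #|zf_step e (zf_iter e s C)|%:R by rewrite ler_nat.
  rewrite -addn1 natrD b2qT; lra.
by rewrite negbK in Hne; rewrite (eqP Hne) subrr b2qF subrr.
Qed.

Lemma obj_c : tsm_objective T xc zc = (#|C| + cnt e T C)%:R.
Proof.
rewrite /tsm_objective /xc sum_b2qT natrD /cnt natr_sum; congr (_ + _).
by congr (_%:R); apply: eq_card => v; rewrite inE.
Qed.

End Constr.

Section Fwd.
Variables (V : finType) (e : rel V) (T : nat)
  (x : nat -> V -> bool) (y : nat -> V -> V -> bool) (z : nat -> bool).
Hypothesis F : tsm_feasible e T x y z.
Let C := [set v | x 0%N v].

Lemma fwd_iter t : (t <= T)%N -> [set v | x t v] = zf_iter e t C.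
Proof.
case: F => H1 [H2 [H3 [H4 [H5 [H6 H7]]]]].
elim: t => [|t IH] Ht; first by [].
rewrite [zf_iter e t.+1 C]/zf_iter iterS -/(zf_iter e t C) -IH ?(ltnW Ht) //.
set X := [set v | x t v].
have Ht' : (1 <= t.+1 <= T)%N by lia.
apply/setP => v; rewrite zf_step_mem !inE.
have E4 := H4 t.+1 v Ht'; rewrite /= in E4.
have Hin0 : 0 <= inflow e y t.+1 v by apply: sumr_ge0 => u _; exact: b2q_ge0.
case Hxt: (x t v) => /=.
  apply: b2q_ge1; rewrite E4 Hxt b2qT; lra.
case Hex: [exists u, can_force e X u v].
  case/existsP: Hex => u /and4P [Hu Hv Huv /forallP Hall].
  have E5 := H5 t.+1 u v Ht' Huv; rewrite /= sum_b2q in E5.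
  have Eset : [set w | (e u w && (w != v)) && x t w] = [set w | e u w && (w != v)].
    apply/setP => w; rewrite !inE; case Hw: (e u w && (w != v)) => //=.
    case/andP: Hw => Huw Hwv; move: (Hall w); rewrite Huw /= inE.
    by case: (x t w) => //= /eqP Hwv'; rewrite Hwv' eqxx in Hwv.
  rewrite Eset in E5; rewrite inE in Hu.
  rewrite (deg_split Huv) Hu Hxt b2qT b2qF -(addn1 #|[set w | e u w && (w != v)]|) natrD in E5.
  apply: b2q_ge1; rewrite E4 Hxt b2qF; lra.
apply/negP => Hxt1; rewrite Hxt1 Hxt b2qT b2qF add0r in E4.
case: (boolP [exists u, e u v && y t.+1 u v]) => [/existsP [u /andP [Huv Hy]] | Hn]; last first.
  move: E4; rewrite /inflow big1 => [|u Huv]; first by move/eqP; rewrite oner_eq0.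
  case Hy: (y t.+1 u v) => //; case/negP: Hn; apply/existsP; exists u; by rewrite Huv Hy.
have Hxu : x t u by apply: b2q_ge1; have := H2 t.+1 u v Ht' Huv; rewrite Hy.
move/negbT: Hex => /existsP; apply; exists u.
rewrite /can_force !inE Hxu Hxt Huv /=; apply/forallP => w; apply/implyP => /andP [Huw].
rewrite inE; case Hxw: (x t w) => //= _; apply/negPn/negP => Hwv.
have := H3 t.+1 u v w Ht' Huv Huw Hwv; rewrite Hy /= Hxw b2qT b2qF; lra.
Qed.

Lemma fwd_all : zf_iter e T C = setT.
Proof.
case: F => H1 [H2 [H3 [H4 _]]].
apply/setP => v; rewrite inE -(fwd_iter (leqnn T)) inE.
apply: b2q_ge1; rewrite (tele (fun t => H4 t v) (leqnn T)) H1 //.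
Qed.

Lemma fwd_z t : (1 <= t <= T)%N -> z t = (zf_iter e t C != zf_iter e t.-1 C).
Proof.
case: F => H1 [H2 [H3 [H4 [H5 [H6 H7]]]]].
move: t => [|s] // Hs.
have E6 := H6 s.+1 Hs; have E7 := H7 s.+1 Hs; rewrite /= in E6 E7.
have Es : forall t v, (t <= T)%N -> x t v = (v \in zf_iter e t C).
  by move=> t v Ht; rewrite -fwd_iter // inE.
have Esum : \sum_(v : V) (b2q (x s.+1 v) - b2q (x s v)) =
  \sum_(v : V) (b2q (v \in zf_iter e s.+1 C) - b2q (v \in zf_iter e s C)).
  by apply: eq_bigr => v _; rewrite !Es //; lia.
rewrite Esum sum_diff in E6 E7; rewrite /=.
have Hsub := zf_sub e (zf_iter e s C).
rewrite -[zf_step e (zf_iter e s C)]/(zf_iter e s.+1 C) in Hsub *.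
case Hz: (z s.+1); rewrite Hz in E6 E7.
  apply/esym/eqP => HBA; rewrite HBA subrr b2qT in E7; lra.
apply/esym/negbTE; rewrite negbK eq_sym eqEcard Hsub /=.
case: (posnP #|V|) => Hn.
  by have := max_card (zf_iter e s.+1 C); rewrite Hn leqn0 => /eqP ->.
rewrite b2qF subr0 pmulr_rle0 ?invr_gt0 ?ltr0n // in E6.
by rewrite -(ler_nat rat); lra.
Qed.

Lemma fwd_obj : tsm_objective T x z = (#|C| + cnt e T C)%:R.
Proof.
rewrite /tsm_objective natrD sum_b2qT; congr (_ + _).
rewrite /cnt natr_sum; apply: eq_big_nat => t Ht; by rewrite fwd_z.
Qed.

End Fwd.

Theorem corollary4p7 (V : finType) (e : rel V)
  (e_sym : symmetric e) (e_irr : irreflexive e)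
  (x : nat -> V -> bool) (y : nat -> V -> V -> bool) (z : nat -> bool) :
  tsm_optimal e (#|V|.-1) x y z ->
  let C := [set v | x 0%N v] in
  zero_forcing_set e C /\
  (exists k : nat,
     k%:R = tsm_objective (#|V|.-1) x z /\ thC_is e C k /\ th_is e k).
Proof.
move=> [F Opt] C.
have HT : zf_iter e #|V|.-1 C = setT := fwd_all F.
have Hex : exists t, zf_iter e t C == setT by exists #|V|.-1; rewrite HT.
case: (ex_minnP Hex) => p Hp Hmin.
have Hpt : pt_is e C p.
  split; first exact/eqP.
  move=> s Hs; apply/negP => Hs'; have := Hmin s Hs'; lia.
have HpT : (p <= #|V|.-1)%N by apply: Hmin; rewrite HT.
split; first by exists #|V|.-1.
exists (#|C| + p)%N; split; first by rewrite (fwd_obj F) (cnt_pt Hpt).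
have HthC : thC_is e C (#|C| + p) by exists p.
split => //; split; first by exists C.
move=> C' k' [p' [Hpt' ->]].
have Hp'T := pt_leT Hpt'.
have HT' := pt_after Hpt' Hp'T.
have := Opt _ _ _ (feas_c HT').
by rewrite obj_c (cnt_pt Hpt') // (fwd_obj F) (cnt_pt Hpt) // ler_nat.
Qed.
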